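(* In base $B=3$, for every $\eta\ge 2$, $$\gamma_3(\eta+1)=2\cdot 3^{\frac{\gamma_3(\eta)-1}{4}}-1,$$ where $\gamma_3(2)=13=(1,1,1)_3$ (so that $\gamma_3(3)=2\cdot3^3-1$).
   Context: Every integer $x>0$ is written uniquely in base $3$ as $x=\sum_{i} x_i 3^i$ with digits $x_i\in\{0,1,2\}$; $(x_{L-1},\dots,x_0)_3$ denotes $x$ by its digits. Define $\mathcal{H}_3(x)=\sum_{i} x_i^2$, $\mathcal{H}_3^0(x)=x$, $\mathcal{H}_3^n=\mathcal{H}_3\circ\mathcal{H}_3^{n-1}$. A positive integer $x$ is happy if $\mathcal{H}_3^n(x)=1$ for some $n\in\mathbb{N}$; its height is $\eta_3(x)=\min\{\alpha\in\mathbb{N}:\mathcal{H}_3^\alpha(x)=1\}$. For $n\in\mathbb{N}$, $\gamma_3(n)$ denotes the smallest happy number $x\ge1$ with $\eta_3(x)=n$. *)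

(* Defs.v *)
From mathcomp Require Import all_boot.
Set Implicit Arguments. Unset Strict Implicit. Unset Printing Implicit Defensive.

Definition digit3 (x i : nat) : nat := (x %/ 3 ^ i) %% 3.

(* H_3(x) = sum of squares of the base-3 digits of x.  Digits of index
   i >= x vanish since 3^i > x, so summing over i < x covers all digits. *)
Definition H3 (x : nat) : nat := \sum_(i < x) (digit3 x i) ^ 2.

Definition H3iter (n x : nat) : nat := iter n H3 x.

Definition happy3 (x : nat) : Prop := exists n, H3iter n x = 1.

Definition height3 (x alpha : nat) : Prop :=
  H3iter alpha x = 1 /\ forall m, m < alpha -> H3iter m x <> 1.

Definition is_gamma3 (n g : nat) : Prop :=
  [/\ 1 <= g, happy3 g, height3 g n &
      forall y, 1 <= y -> y < g -> happy3 y -> ~ height3 y n].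

(* Main.v *)
Require Import Defs.
From mathcomp Require Import all_boot.
From mathcomp Require Import zify.

Definition S3 (n y : nat) : nat := \sum_(i < n) (digit3 y i) ^ 2.

Lemma digit_big y i : y < 3 ^ i -> digit3 y i = 0.
Proof. by move=> h; rewrite /digit3 divn_small. Qed.

Lemma S_ext y n m : y < 3 ^ n -> n <= m -> S3 m y = S3 n y.
Proof.
move=> hy nm; rewrite /S3 -(subnKC nm) big_split_ord /=.
rewrite [X in _ + X]big1 ?addn0 // => i _.
rewrite digit_big //; apply: (leq_trans hy); apply: leq_pexp2l => //.
by rewrite leq_addr.
Qed.

Lemma H3_S y n : y < 3 ^ n -> H3 y = S3 n y.
Proof.
move=> hy; have hy' : y < 3 ^ y by apply: ltn_expl.
rewrite /H3 -/(S3 y y).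
case: (leqP n y) => h; first by rewrite (@S_ext y n y hy h).
by rewrite (@S_ext y y n hy' (ltnW h)).
Qed.

Lemma H3_0 : H3 0 = 0.
Proof. by rewrite /H3 big_ord0. Qed.

Lemma H3_rec y : H3 y = (y %% 3) ^ 2 + H3 (y %/ 3).
Proof.
have hy : y < 3 ^ y.+1 by apply: ltnW; apply: ltn_expl.
have hq : y %/ 3 < 3 ^ y.
  apply: leq_ltn_trans (ltn_expl y (isT : 1 < 3)); exact: leq_div.
rewrite (@H3_S _ _ hy) (@H3_S _ _ hq) /S3 big_ord_recl /digit3 expn0 divn1; congr (_ + _).
by apply: eq_bigr => i _; by rewrite -divnMA -expnS.
Qed.

Fixpoint hf (f y : nat) : nat :=
  match f with 0 => 0 | f'.+1 => (y %% 3) ^ 2 + hf f' (y %/ 3) end.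

Lemma hf_H3 f y : y < 3 ^ f -> H3 y = hf f y.
Proof.
elim: f y => [|f IH] y /=.
  by rewrite expn0 ltnS leqn0 => /eqP ->; rewrite H3_0.
move=> hy; rewrite H3_rec IH // ltn_divLR // -expnSr //.
Qed.

Lemma sq3 r : r < 3 -> r ^ 2 <= 4.
Proof. by case: r => [|[|[|]]]. Qed.

Lemma boundP k y : y < 2 * 3 ^ k -> H3 y <= 4 * k + 1.
Proof.
elim: k y => [|k IH] y.
  rewrite expn0 => hy; rewrite (@hf_H3 1 y) //; last by rewrite expn1; lia.
  by case: y hy => [|[|]].
move=> hy; rewrite H3_rec.
have hq : y %/ 3 < 2 * 3 ^ k by rewrite ltn_divLR // -mulnA -expnSr.
have := IH _ hq; have := @sq3 _ (ltn_pmod y (isT : 0 < 3)); lia.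
Qed.

Lemma boundM k y : y.+2 <= 2 * 3 ^ k -> H3 y <= 4 * k.
Proof.
elim: k y => [|k IH] y.
  by rewrite expn0; case: y => // _; rewrite H3_0.
move=> hy; rewrite H3_rec.
have e := divn_eq y 3; have r3 := ltn_pmod y (isT : 0 < 3).
have hr := @sq3 _ r3.
have hr1 : y %% 3 <= 1 -> (y %% 3) ^ 2 <= 1 by case: (y %% 3) => [|[|]].
move: hy; rewrite expnS => hy.
set t := 3 ^ k in hy IH.
case: (leqP (y %/ 3).+2 (2 * t)) => h.
  have := IH _ h; lia.
have hq : y %/ 3 < 2 * 3 ^ k by lia.
have := @boundP _ _ hq. move: hr1 hr e. 
move: (y %% 3 ^ 2) => _.
set r := y %% 3. set q := y %/ 3. move: (r ^ 2) => s. lia.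
Qed.

Lemma H3_f k : H3 (2 * 3 ^ k - 1) = 4 * k + 1.
Proof.
elim: k => [|k IH]; first by rewrite (@hf_H3 1).
rewrite H3_rec.
have e : 2 * 3 ^ k.+1 - 1 = (2 * 3 ^ k - 1) * 3 + 2.
  rewrite expnS; have : 0 < 3 ^ k by rewrite expn_gt0. lia.
rewrite e modnMDl divnMDl // (divn_small (isT : 2 < 3)) addn0 IH. lia.
Qed.

Lemma iter0 n : H3iter n 0 = 0.
Proof. by elim: n => //= n IH; rewrite /H3iter /= -/(H3iter n 0) IH H3_0. Qed.

Lemma iterS n x : H3iter n.+1 x = H3iter n (H3 x).
Proof. by rewrite /H3iter iterSr. Qed.

Lemma gamma_uniq n g1 g2 : is_gamma3 n g1 -> is_gamma3 n g2 -> g1 = g2.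
Proof.
case=> a1 b1 c1 d1 [a2 b2 c2 d2].
case: (ltngtP g1 g2) => // h.
- by case: (d2 _ a1 h b1 c1).
- by case: (d1 _ a2 h b2 c2).
Qed.

Lemma key eta g : 2 <= eta -> is_gamma3 eta g -> 4 %| g - 1 ->
  is_gamma3 eta.+1 (2 * 3 ^ ((g - 1) %/ 4) - 1).
Proof.
move=> he [g1 hap [hg hgm] gmin] d4.
set k := (g - 1) %/ 4.
have gk : g = 4 * k + 1.
  have := divnK d4; rewrite -/k; lia.
have g1' : g != 1.
  apply/eqP => E; apply: (hgm 0); first by lia. by rewrite /H3iter /= E.
have k1 : 1 <= k by lia.
have t3 : 3 <= 3 ^ k by rewrite -{1}(expn1 3) leq_pexp2l.
set x := 2 * 3 ^ k - 1.
have Hx : H3 x = g by rewrite /x H3_f gk.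
have x1 : x != 1 by rewrite /x; lia.
have hx : height3 x eta.+1.
  split; first by rewrite iterS Hx.
  case=> [_|m hm]; first by rewrite /H3iter /=; apply/eqP.
  by rewrite iterS Hx; apply: hgm.
split.
- rewrite /x; lia.
- by exists eta.+1; case: hx.
- exact: hx.
move=> y y1 yx _ [hy hym].
set z := H3 y.
have hz : height3 z eta.
  split; first by rewrite -iterS.
  by move=> m hm; rewrite -iterS; apply: hym.
have z1 : 1 <= z.
  case: hz => hz _; move: hz; case: (posnP z) => // ->; by rewrite iter0.
have zg : g <= z.
  rewrite leqNgt; apply/negP => zg.
  apply: (gmin z z1 zg) => //; by exists eta; case: hz.
have : z <= 4 * k by apply: boundM; rewrite /x in yx; lia.
lia.
Qed.

Definition chk (y : nat) : bool :=
  [|| y == 1, hf 3 y == 1 | hf 3 (hf 3 y) != 1] && (hf 3 y < 27).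

Lemma base : is_gamma3 2 13.
Proof.
have e13 : H3 13 = 3 by rewrite (@hf_H3 3).
have e3 : H3 3 = 1 by rewrite (@hf_H3 3).
split => //.
- by exists 2; rewrite /H3iter /= e13 e3.
- split; first by rewrite /H3iter /= e13 e3.
  by case=> [|[|]] //= _; rewrite /H3iter /= e13.
move=> y y1 y13 _ [h2 hm].
have : all chk (iota 1 12) by [].
move/allP => /(_ y).
rewrite mem_iota y1 /=.
move=> /(_ y13).
have ey : H3 y = hf 3 y by apply: hf_H3; apply: (ltn_trans y13).
rewrite /chk -ey => /andP [c lt].
have eyy : H3 (H3 y) = hf 3 (hf 3 y) by rewrite -ey; apply: hf_H3.
have h2' : H3 (H3 y) = 1 by [].
case/or3P: c => /eqP c.
- by apply: (hm 0).
- by apply: (hm 1).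
- move: c eyy h2'; rewrite ey => c -> ; by move/c.
Qed.

Lemma exists_gamma eta : 2 <= eta -> exists g, is_gamma3 eta g /\ 4 %| g - 1.
Proof.
elim: eta => [|e IH] // he.
case: (leqP e 1) => h.
  have -> : e = 1 by lia.
  by exists 13; split => //; exact: base.
have [g [hg dg]] := IH h.
exists (2 * 3 ^ ((g - 1) %/ 4) - 1); split; first exact: key.
set k := (g - 1) %/ 4.
have o : odd (3 ^ k) by rewrite oddX orbT.
have := odd_double_half (3 ^ k); rewrite o.
move: ((3 ^ k)./2) => j; rewrite -muln2 => <-.
apply/dvdnP; exists j; lia.
Qed.

Theorem lemma5p1 :
  is_gamma3 2 13 /\
  forall (eta g : nat), 2 <= eta -> is_gamma3 eta g ->
    4 %| g - 1 /\ is_gamma3 eta.+1 (2 * 3 ^ ((g - 1) %/ 4) - 1).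
Proof.
split; first exact: base.
move=> eta g he hg.
have [g' [hg' d]] := @exists_gamma _ he.
have E := @gamma_uniq _ _ _ hg hg'; subst g'.
split => //; exact: key.
Qed.
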